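(* Let $p$ be a prime and $n \geq 2$. Let $N$ be the cyclic group of order $p^n$, let $K$ be the Sylow $p$-subgroup of $\mathrm{Aut}(N)$, and let $G := N \rtimes K$ (with the natural action). Then $G$ is weakly-top.
   Context: For a group $H$, $H'$ denotes its commutator subgroup. A finite group $G$ is weakly-top if $|H/H'| \leq |G/G'|$ for every proper subgroup $H<G$. *)

(* Defs.v *)
From mathcomp Require Import all_boot all_fingroup all_solvable.
Set Implicit Arguments. Unset Strict Implicit. Unset Printing Implicit Defensive.
Local Open Scope group_scope.

Definition weakly_top (gT : finGroupType) (G : {group gT}) : Prop :=
  forall H : {group gT}, H \proper G -> #|H / H^`(1)| <= #|G / G^`(1)|.

(* Main.v *)
Require Import Defs.
From mathcomp Require Import all_boot all_fingroup all_solvable.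
Local Open Scope group_scope.

Lemma ub (gT : finGroupType) (G N H : {group gT}) :
  N <| G -> cyclic N -> 'C_G(N) \subset N -> H \subset G ->
  #|H / H^`(1)| <= #|N|.
Proof.
move=> /andP[sNG nNG] cycN cGN sHG.
have abN := cyclic_abelian cycN.
have nNH : H \subset 'N(N) := subset_trans sHG nNG.
set M := (H :&: N)%G.
set E := [~: M, H].
set D := [~: N, H].
have sMN : M \subset N := subsetIr _ _.
have sEH' : E \subset H^`(1) by rewrite derg1 commgSS // subsetIl.
have kerH : 'ker_H (conj_aut N) = M.
  rewrite ker_conj_aut; apply/eqP; rewrite eqEsubset; apply/andP; split.
    rewrite subsetI subsetIl /=; apply: subset_trans cGN.
    by apply: setSI.
  by rewrite setIS.
have cardH : #|H| = (#|M| * #|conj_aut N @* H|)%N.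
  rewrite card_morphim (setIidPr nNH).
  by rewrite -indexgI kerH Lagrange // subsetIl.
have sDN : D \subset N by rewrite /D commg_subl.
case/cyclicP: (cycN) => x defN.
have xN : x \in N by rewrite defN cycle_id.
have bound1 : #|conj_aut N @* H| <= #|D|.
  have inj : {in conj_aut N @* H &, injective (fun t : {perm gT} => x^-1 * t x)}.
    move=> _ _ /morphimP[h1 h1N h1H ->] /morphimP[h2 h2N h2H ->] /=.
    rewrite !norm_conj_autE // => /mulgI e.
    have kh : h1 * h2^-1 \in 'ker (conj_aut N).
      rewrite ker_conj_aut defN cent_cycle; apply/cent1P.
      rewrite /commute (conjgC x) conjgM e conjgK //.
    by rewrite -(mulgKV h2 h1) morphM ?groupM ?groupV // mker // mul1g.
  rewrite -(card_in_imset inj); apply: subset_leq_card; apply/subsetP => _ /imsetP[t tA ->].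
  case/morphimP: tA => h hN hH ->.
  by rewrite norm_conj_autE //; apply: mem_commg.
have bound2 : #|D| <= #|N : M| * #|E|.
  set k := #|N : M|.
  have sDx : D \subset <[x]> by rewrite -defN.
  pose phi := cyclem k x.
  have cardD : #|D| = (#|'ker_D phi| * #|phi @* D|)%N.
    by rewrite card_morphim (setIidPr sDx) -indexgI Lagrange // subsetIl.
  rewrite cardD; apply: leq_mul.
    have : cyclic ('ker_D phi).
      apply: cyclicS (cycle_cyclic x); exact: subset_trans (subsetIl _ _) sDx.
    case/cyclicP => z defz.
    have zk : z \in 'ker_D phi by rewrite defz cycle_id.
    have zx : z \in <[x]> by apply: (subsetP sDx); case/setIP: zk.
    have zk1 : z ^+ k = 1.
      have := @mker _ _ _ phi z; apply; by case/setIP: zk.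
    rewrite defz -orderE; apply: dvdn_leq; first exact: indexg_gt0.
    by rewrite order_dvdn zk1.
  have nMN : N \subset 'N(M) := sub_abelian_norm abN sMN.
  have ykM : forall y, y \in N -> y ^+ k \in M.
    move=> y yN; apply: coset_idr; first by rewrite groupX // (subsetP nMN).
    rewrite morphX ?(subsetP nMN) //.
    by rewrite /k -card_quotient // expg_cardG // mem_quotient.
  have sS : commg_set N H \subset <[x]>.
    by apply: subset_trans sDx; apply: subset_gen.
  rewrite /commutator morphim_gen //; apply: subset_leq_card.
  rewrite gen_subG; apply/subsetP => _ /morphimP[c cx cS ->].
  case/imset2P: cS => y h yN hH ->.
  have yhN : y ^ h \in N by rewrite memJ_norm // (subsetP nNH).
  have cyh : commute y^-1 (y ^ h).
    by apply: (centsP abN); rewrite ?groupV.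
  change ([~ y, h] ^+ k \in E).
  have -> : [~ y, h] ^+ k = [~ y ^+ k, h].
    by rewrite /commg expgMn // expVgn conjXg.
  by apply: mem_commg => //; apply: ykM.
have cardN : #|N| = (#|M| * #|N : M|)%N by rewrite Lagrange.
have : #|H| <= #|N| * #|E|.
  by rewrite cardH cardN -mulnA leq_mul2l (leq_trans bound1 bound2) orbT.
rewrite card_quotient ?der_norm //.
rewrite -(Lagrange (der_sub 1 H)) mulnC => le.
rewrite -(leq_pmul2r (cardG_gt0 E)).
apply: leq_trans le; rewrite leq_mul2l.
by rewrite subset_leq_card // orbT.
Qed.

Theorem lemma2p8 (gT : finGroupType) (G N K : {group gT}) (p n : nat) :
  prime p -> (2 <= n)%N ->
  cyclic N -> #|N| = (p ^ n)%N ->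
  N ><| K = G ->
  'C_K(N) = 1 ->
  (conj_aut N @* K)%G \in 'Syl_p(Aut N) ->
  weakly_top G.
Proof.
move=> pp n2 cycN cardN defG cKN sylA.
have [nNG sKG defNK nNK tiNK] := sdprod_context defG.
have abN := cyclic_abelian cycN.
have p1 : 1 < p := prime_gt1 pp.
have cGN : 'C_G(N) \subset N.
  apply/subsetP => g /setIP[gG gC]; rewrite -defNK in gG.
  case/mulsgP: gG => a b aN bK defg.
  have bC : b \in 'C(N).
    have -> : b = a^-1 * g by rewrite defg mulKg.
    by rewrite groupM ?groupV // (subsetP abN).
  have : b \in 'C_K(N) by rewrite inE bK bC.
  by rewrite cKN inE => /eqP b1; rewrite defg b1 mulg1.
move=> H /proper_sub sHG; apply: leq_trans (@ub _ G N H nNG cycN cGN sHG) _.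
have cardAK : #|conj_aut N @* K| = #|K|.
  have kK : 'ker_K (conj_aut N) = 1 by rewrite ker_conj_aut cKN.
  rewrite card_morphim (setIidPr nNK) -indexgI.
  rewrite /= kK; exact: indexg1.
have cardK : #|K| = (p ^ n.-1)%N.
  rewrite -cardAK; move: sylA; rewrite inE => /card_Hall ->.
  rewrite card_Aut_cyclic // cardN totient_pfactor //; last exact: ltnW n2.
  rewrite p_part logn_Gauss ?pfactorK //.
  by apply: coprimenP; apply: prime_gt0.
have cardG : #|G| = (p ^ n * p ^ n.-1)%N by rewrite -(sdprod_card defG) cardN cardK.
have pG : p.-group G by rewrite /pgroup cardG -expnD pnatX pnat_id.
have ntN : N :!=: 1.
  apply/eqP => N1; move: cardN; rewrite N1 cards1 => /eqP.
  rewrite -(expn0 p) eqn_exp2l // => /eqP n0; by rewrite -n0 in n2.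
have nNG' := normal_norm nNG.
have sNG := normal_sub nNG.
have nRG : G \subset 'N([~: N, G]) by apply: normsR; [exact: nNG' | exact: normG].
have RN : [~: N, G] \proper N.
  apply: nil_comm_properl (pgroup_nil pG) sNG ntN _.
  by rewrite subsetI subxx nNG'.
have abK : abelian K.
  have injf : 'injm (restrm nNK (conj_aut N)).
    by rewrite ker_restrm ker_conj_aut cKN.
  rewrite -(injm_abelian injf (subxx K)) morphim_restrm setIid.
  exact: abelianS (Aut_conj_aut _ _) (Aut_cyclic_abelian cycN).
have G'R : G^`(1) \subset [~: N, G].
  apply: der1_min => //.
  have -> : G / [~: N, G] = N / [~: N, G] * (K / [~: N, G]) by rewrite -quotientMl ?defNK // (subset_trans sNG nRG).
  rewrite abelianM !quotient_abelian //=.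
  rewrite centsC; apply: quotient_cents2r.
  by apply: commgS.
have G'N : G^`(1) \proper N := sub_proper_trans G'R RN.
have cardG' : #|G^`(1)| <= p ^ n.-1.
  have := cardSg (proper_sub G'N); rewrite cardN => /(dvdn_pfactor _ _ pp)[m _ em].
  have := proper_card G'N; rewrite em cardN ltn_exp2l // => lmn.
  by rewrite leq_exp2l // -ltnS (ltn_predK n2).
rewrite card_quotient ?der_norm // cardN.
have := Lagrange (der_sub 1 G); rewrite cardG => eG.
have pn1 : 0 < p ^ n.-1 by rewrite expn_gt0 prime_gt0.
rewrite -(leq_pmul2l pn1) mulnC -eG leq_mul2r cardG' orbT //.
Qed.
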